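(* Let $H$ be a binary tree based graph and $Z$ a uniform read-$d$-times NBP computing $\phi_H$. Let $X\subseteq V(Z)$ separate subsets $Y_1,Y_2$ of ${\bf Roots}(H)$, and let $M$ be a pseudomatching of $H$ between $Y_1$ and $Y_2$. Then for every assignment $S$ (set of literals) to all variables of $V(H)\setminus\bigcup M$ there is $\varphi\in{\bf CNF}(M)$ such that for every computational path $P$ of $Z$ passing through all vertices of $X$ with $S\subseteq A(P)$, the assignment $A(P)$ satisfies $\varphi$.
   Context: A rooted tree is extended if none of its leaves has a sibling. A graph $H$ is a binary tree based graph if it is the edge-disjoint union of extended rooted trees $T_1,\dots,T_m$ with roots $t_1,\dots,t_m$ (forming ${\bf Roots}(H)$) such that every leaf of some $T_i$ is a leaf of exactly two of the trees, and any two trees have at most one common vertex, which is a leaf of both. $T_i,T_j$ are adjacent if they share a leaf $\ell_{i,j}$; $P_{i,j}$ is the path between $t_i$ and $t_j$ in $T_i\cup T_j$; $P^{1/2}_{i\to j}$ is the path in $T_i$ from $t_i$ to $\ell_{i,j}$. A pseudoedge is a pair $\{t_i,t_j\}$ with $T_i,T_j$ adjacent; a pseudomatching is a set of pairwise disjoint pseudoedges, between disjoint $U,V$ if each has one end in each; $\bigcup M$ is the set of ends of pseudoedges of $M$. $\phi_H$ is the CNF on variables $V(H)$ with a clause $C_{i,j}$ (positive literals of $V(P_{i,j})$) for each pseudoedge. ${\bf CNF}(M)$ is the set of CNFs consisting, for each $\{t_i,t_j\}\in M$, of one clause that is either the disjunction of positive literals of $V(P^{1/2}_{i\to j})$ or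 of $V(P^{1/2}_{j\to i})$. An NBP $Z$ is a directed acyclic multigraph with one source and one sink, some edges labelled with literals. A source-sink path is computational if no variable occurs on it with both signs; $A(P)$ is its set of literals. $Z$ computes the function whose satisfying assignments are the total assignments $S$ with $A(P)\subseteq S$ for some computational path $P$. Read-$d$-times: each variable labels at most $d$ edges of each source-sink path; uniform: exactly $d$. A partition of a path $P$ is a sequence $P_1,\dots,P_c$ of subpaths with $P_1$ a prefix, $P_c$ a suffix, and the first vertex of $P_i$ equal to the last vertex of $P_{i-1}$; the set $X$ of the ends of $P_1,\dots,P_{c-1}$ generates it. $X\subseteq V(Z)$ not containing source or sink separates disjoint variable sets $Y_1,Y_2$ if there is a computational path $P$ through all vertices of $X$ such that in the partition $P_1,\dots,P_{|X|+1}$ generated by $X$ on $P$, either variables of $Y_1$ label edges only of odd-indexed $P_i$ and variables of $Y_2$ only of even-indexed $P_i$, or vice versa. *)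

(* Defs.v *)
From mathcomp Require Import all_boot.
Set Implicit Arguments.
Unset Strict Implicit.
Unset Printing Implicit Defensive.

(* The vertex type V is the vertex set V(H) (see is_btbg: the trees    *)
(* cover V).  Rooted tree T_i is given by its vertex set, its root and *)
(* a parent function; its edges are {v, par v} for non-root v.          *)
Record btbg (V : finType) := BTBG {
  ntrees : nat;
  tverts : 'I_ntrees -> {set V};
  troot  : 'I_ntrees -> V;
  tpar   : 'I_ntrees -> V -> V }.

Section BTBG.
Variables (V : finType) (H : btbg V).
Local Notation T := 'I_(ntrees H).

Definition pstep (i : T) : rel V :=
  fun a b => [&& a \in tverts i, a != troot i & b == tpar i a].

Definition is_rooted_tree (i : T) : Prop :=
  [/\ troot i \in tverts i,
      forall v, v \in tverts i -> v != troot i -> tpar i v \in tverts i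
    & forall v, v \in tverts i -> connect (pstep i) v (troot i)].

Definition tedges (i : T) : {set {set V}} :=
  [set [set v; tpar i v] | v in tverts i :\ troot i].

Definition children (i : T) (v : V) : {set V} :=
  [set u in tverts i :\ troot i | tpar i u == v].

Definition leaf (i : T) (v : V) : bool :=
  (v \in tverts i) && (children i v == set0).

Definition extended (i : T) : Prop :=
  forall l u, leaf i l -> l != troot i ->
    u \in tverts i -> u != troot i -> tpar i u = tpar i l -> u = l.

Definition is_btbg : Prop :=
  [/\ (forall i, is_rooted_tree i /\ extended i),
      (forall i j, i != j -> [disjoint tedges i & tedges j]),
      (forall v : V, exists i : T, v \in tverts i),
      (forall i l, leaf i l -> #|[set j | leaf j l]| = 2)
    & (forall i j v, i != j -> v \in tverts i -> v \in tverts j ->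
          [/\ leaf i v, leaf j v &
              forall w, w \in tverts i -> w \in tverts j -> w = v])].

Definition Roots : {set V} := [set troot i | i : T].

Definition adjacent (i j : T) : bool :=
  (i != j) && [exists l, leaf i l && leaf j l].

(* V(P^{1/2}_{i->j}): vertices of the path in T_i from t_i to l_{i,j},
   i.e. l_{i,j} and its ancestors in T_i *)
Definition halfpath (i j : T) : {set V} :=
  [set u | [exists l, [&& leaf i l, leaf j l & connect (pstep i) l u]]].

(* V(P_{i,j}) : path between t_i and t_j in T_i u T_j *)
Definition Ppath (i j : T) : {set V} := halfpath i j :|: halfpath j i.

(* CNFs are sets of clauses; a clause (all literals positive) is given
   by its set of variables. *)
Definition phiH : {set {set V}} := [set Ppath e.1 e.2 | e in [pred e : T * T | adjacent e.1 e.2]].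

(* pseudomatchings: pseudoedges {t_i,t_j} are represented by pairs of
   tree indices (i,j), oriented so that t_i is the end in Y1 *)
Definition pseudomatching_between (M : {set T * T}) (Y1 Y2 : {set V}) : Prop :=
  (forall e, e \in M -> [&& adjacent e.1 e.2, troot e.1 \in Y1 & troot e.2 \in Y2])
  /\ (forall e e', e \in M -> e' \in M -> e != e' ->
        [disjoint [set troot e.1; troot e.2] & [set troot e'.1; troot e'.2]]).

Definition bigcupM (M : {set T * T}) : {set V} :=
  [set troot e.1 | e in M] :|: [set troot e.2 | e in M].

Definition CNFM (M : {set T * T}) : {set {set {set V}}} :=
  [set phi | [exists c : {ffun T * T -> bool},
     phi == [set (if c e then halfpath e.1 e.2 else halfpath e.2 e.1) | e in M]]].

End BTBG.

Definition satisfies (V : finType) (L : {set V * bool}) (phi : {set {set V}}) : Prop :=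
  forall C, C \in phi -> exists2 u, u \in C & (u, true) \in L.

Definition assignment_on (V : finType) (S : {set V * bool}) (U : {set V}) : Prop :=
  (forall x b, (x, b) \in S -> x \in U) /\
  (forall x, x \in U -> ((x, true) \in S) (+) ((x, false) \in S)).

(* Literals are pairs (x, b): b = true positive, b = false negative.   *)
Record nbp (V : finType) := NBP {
  nvert : finType;
  nedge : finType;
  ntail : nedge -> nvert;
  nhead : nedge -> nvert;
  nlab  : nedge -> option (V * bool);
  nsrc  : nvert;
  nsnk  : nvert }.
Arguments ntail {V n} _.
Arguments nhead {V n} _.
Arguments nlab {V n} _.

Section NBP.
Variables (V : finType) (Z : nbp V).

Fixpoint walk (u v : nvert Z) (p : seq (nedge Z)) : bool :=
  match p with
  | [::] => u == v
  | e :: p' => (ntail e == u) && walk (nhead e) v p'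
  end.

Definition is_nbp : Prop :=
  [/\ (forall u p, walk u u p -> p = [::]),
      (forall w, (forall e, nhead e != w) <-> w = nsrc Z)
    & (forall w, (forall e, ntail e != w) <-> w = nsnk Z)].

Definition ss_path (p : seq (nedge Z)) : bool := walk (nsrc Z) (nsnk Z) p.

Definition labvar (e : nedge Z) : option V := omap fst (nlab e).

Definition lits (p : seq (nedge Z)) : {set V * bool} :=
  [set l | has (fun e => nlab e == Some l) p].

Definition computational (p : seq (nedge Z)) : bool :=
  [forall x : V, ~~ (((x, true) \in lits p) && ((x, false) \in lits p))].

(* Z computes the function whose satisfying (total) assignments are
   sigma; a total assignment is seen as the set of literals
   [set (x, sigma x) | x]. *)
Definition computes (phi : {set {set V}}) : Prop :=
  forall sigma : V -> bool,
    satisfies [set (x, sigma x) | x : V] phi <->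
    exists p, [/\ ss_path p, computational p & lits p \subset [set (x, sigma x) | x : V]].

Definition uniform_read (d : nat) : Prop :=
  forall p, ss_path p -> forall x : V, count (fun e => labvar e == Some x) p = d.

Definition path_verts (p : seq (nedge Z)) : seq (nvert Z) := nsrc Z :: map nhead p.

(* In the partition of P generated by X, edge number k (from 0) of P,
   going from vertex v_k to v_(k+1), lies in the part of index
   1 + #{ j <= k | v_j \in X }. *)
Definition part_index (X : {set nvert Z}) (p : seq (nedge Z)) (k : nat) : nat :=
  (count (fun e => ntail e \in X) (take k.+1 p)).+1.

Definition odd_even_parts (X : {set nvert Z}) (p : seq (nedge Z)) (Ya Yb : {set V}) : Prop :=
  forall k e x, onth p k = Some e -> labvar e = Some x ->
    (x \in Ya -> odd (part_index X p k)) /\ (x \in Yb -> ~~ odd (part_index X p k)).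

Definition separates (X : {set nvert Z}) (Y1 Y2 : {set V}) : Prop :=
  [/\ [disjoint Y1 & Y2], nsrc Z \notin X, nsnk Z \notin X &
      exists p, [/\ ss_path p, computational p,
                    {subset X <= path_verts p} &
                    odd_even_parts X p Y1 Y2 \/ odd_even_parts X p Y2 Y1]].

End NBP.

(* Main.v *)
Require Import Defs.
From mathcomp Require Import all_boot.
From Stdlib Require Import Classical ClassicalEpsilon.
From mathcomp Require Import zify.
Set Implicit Arguments.
Unset Strict Implicit.
Unset Printing Implicit Defensive.

Definition wend (V : finType) (Z : nbp V) (u : nvert Z) (a : seq (nedge Z)) :=
  last u (map nhead a).

Lemma walk_cat (V : finType) (Z : nbp V) (u v : nvert Z) a b :
  walk u v (a ++ b) = walk u (wend u a) a && walk (wend u a) v b.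
Proof.
elim: a u => [|e a IH] u /=; first by rewrite eqxx.
by rewrite IH andbA.
Qed.

Lemma walk_end (V : finType) (Z : nbp V) (u v : nvert Z) a :
  walk u v a -> wend u a = v.
Proof.
elim: a u => [|e a IH] u /=; first by move/eqP.
by case/andP => _ /IH.
Qed.

Lemma walk_catP (V : finType) (Z : nbp V) (u w v : nvert Z) a b :
  walk u w a -> walk w v b -> walk u v (a ++ b).
Proof.
move=> Wa Wb; rewrite walk_cat (walk_end Wa).
by rewrite Wa Wb.
Qed.

Lemma walk_split (V : finType) (Z : nbp V) (u v y : nvert Z) p :
  walk u v p -> y \in map ntail p ->
  exists a b, [/\ p = a ++ b, walk u y a & walk y v b].
Proof.
elim: p u => [|e p IH] u //= /andP [/eqP Te Wp].
rewrite in_cons => /orP [/eqP Hy|Hy].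
  exists [::], (e :: p); split => //=; first by rewrite Hy Te.
  by rewrite Hy eqxx.
have [a [b [-> Wa Wb]]] := IH _ Wp Hy.
by exists (e :: a), b; split => //=; rewrite Te eqxx.
Qed.

Lemma noX_split (V : finType) (Z : nbp V) (X : {set nvert Z}) (q : seq (nedge Z)) :
  exists a b, [/\ q = a ++ b, ~~ has (fun e => ntail e \in X) a &
     (b = [::] \/ exists f b', b = f :: b' /\ ntail f \in X)].
Proof.
elim: q => [|e q [a [b [-> Na Hb]]]].
  by exists [::], [::]; split => //; left.
case He: (ntail e \in X).
  by exists [::], (e :: a ++ b); split => //; right; exists e, (a ++ b).
by exists (e :: a), b; split => //=; rewrite He.
Qed.

Fixpoint sel (V : finType) (Z : nbp V) (X : {set nvert Z}) (c : bool)
  (p : seq (nedge Z)) : seq (nedge Z) :=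
  match p with
  | [::] => [::]
  | e :: p' => let c' := c (+) (ntail e \in X) in
               if c' then e :: sel X c' p' else sel X c' p'
  end.

Lemma sel_cons (V : finType) (Z : nbp V) (X : {set nvert Z}) c e p :
  sel X c (e :: p) = let c' := c (+) (ntail e \in X) in
               if c' then e :: sel X c' p else sel X c' p.
Proof. by []. Qed.

Lemma sel_noX (V : finType) (Z : nbp V) (X : {set nvert Z}) c a b :
  ~~ has (fun e => ntail e \in X) a ->
  sel X c (a ++ b) = (if c then a else [::]) ++ sel X c b.
Proof.
elim: a => [|e a IH] /=; first by case: c.
rewrite negb_or => /andP [/negbTE -> Na]; rewrite addbF IH //.
by clear IH; case: c.
Qed.

Lemma notin_after (V : finType) (Z : nbp V) (u w v : nvert Z) a b :
  (forall (x : nvert Z) (p : seq (nedge Z)), walk x x p -> p = [::]) ->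
  walk u w a -> a <> [::] -> walk w v b -> u \notin map ntail b.
Proof.
move=> acyc Wa Na Wb; apply/negP => Hu.
have [b1 [b2 [_ Wb1 _]]] := walk_split Wb Hu.
have := acyc _ _ (walk_catP Wa Wb1).
by case: a Na {Wa}.
Qed.

Lemma tails_noX (V : finType) (Z : nbp V) (X : {set nvert Z}) a y :
  ~~ has (fun e => ntail e \in X) a -> y \in X -> y \notin map ntail a.
Proof.
move=> Na Hy; apply/negP => /mapP [e He Hye].
by move/hasPn: Na => /(_ e He); rewrite -Hye Hy.
Qed.

Lemma tails_mid (V : finType) (Z : nbp V) (X : {set nvert Z}) u e a b y :
  ntail e = u -> ~~ has (fun e => ntail e \in X) a -> y \in X -> y != u ->
  (y \in map ntail (e :: a ++ b)) = (y \in map ntail b).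
Proof.
move=> Te Na Hy Hyu; rewrite /= map_cat in_cons mem_cat Te (negbTE Hyu) /=.
by rewrite (negbTE (tails_noX Na Hy)).
Qed.

Lemma splice (V : finType) (Z : nbp V) (X : {set nvert Z}) :
  (forall (x : nvert Z) (p : seq (nedge Z)), walk x x p -> p = [::]) ->
  forall n u p1 p2 c, size p1 + size p2 <= n ->
  walk u (nsnk Z) p1 -> walk u (nsnk Z) p2 ->
  (forall x, x \in X -> (x \in map ntail p1) = (x \in map ntail p2)) ->
  exists p, walk u (nsnk Z) p /\ perm_eq p (sel X c p1 ++ sel X (~~ c) p2).
Proof.
move=> acyc; elim=> [|n IH] u p1 p2 c.
  case: p1 p2 => [|??] [|??] //= _ Hu _ _.
  by exists [::]; split.
move=> Hs W1 W2 HX.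
case: p1 Hs W1 HX => [|e1 q1] Hs W1 HX.
  move: W1 => /= /eqP Hu; subst u; rewrite (acyc _ _ W2).
  by exists [::]; split => //=.
case: p2 Hs W2 HX => [|e2 q2] Hs W2 HX.
  move: W2 => /= /eqP Hu; subst u; have := acyc _ _ W1; done.
move: W1 W2 => /= /andP [/eqP T1 W1] /andP [/eqP T2 W2].
have [a1 [b1 [Eq1 Na1 Hb1]]] := noX_split X q1.
have [a2 [b2 [Eq2 Na2 Hb2]]] := noX_split X q2.
subst q1 q2.
move: (W1) (W2); rewrite !walk_cat => /andP [Wa1 Wb1] /andP [Wa2 Wb2].
set w1 := wend (nhead e1) a1 in Wa1 Wb1.
set w2 := wend (nhead e2) a2 in Wa2 Wb2.
have Wea1 : walk u w1 (e1 :: a1) by rewrite /= T1 eqxx.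
have Wea2 : walk u w2 (e2 :: a2) by rewrite /= T2 eqxx.
have nu1 : u \notin map ntail b1 := notin_after acyc Wea1 (fun h => ltac:(discriminate h)) Wb1.
have nu2 : u \notin map ntail b2 := notin_after acyc Wea2 (fun h => ltac:(discriminate h)) Wb2.
have neq1 : forall y, y \in map ntail b1 -> y != u.
  by move=> y Hy; apply/eqP => Hyu; rewrite -Hyu Hy in nu1.
have neq2 : forall y, y \in map ntail b2 -> y != u.
  by move=> y Hy; apply/eqP => Hyu; rewrite -Hyu Hy in nu2.
have T12 : forall y, y \in X -> y \in map ntail b1 -> y \in map ntail b2.
  move=> y Hy Hb; have := HX y Hy.
  by rewrite (tails_mid _ T1 Na1 Hy (neq1 _ Hb)) (tails_mid _ T2 Na2 Hy (neq1 _ Hb)) Hb => <-.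
have T21 : forall y, y \in X -> y \in map ntail b2 -> y \in map ntail b1.
  move=> y Hy Hb; have := HX y Hy.
  by rewrite (tails_mid _ T1 Na1 Hy (neq2 _ Hb)) (tails_mid _ T2 Na2 Hy (neq2 _ Hb)) Hb => ->.
have Ew : w1 = w2.
  case: Hb1 => [Eb1|[f1 [b1' [Eb1 Xf1]]]];
  case: Hb2 => [Eb2|[f2 [b2' [Eb2 Xf2]]]]; subst b1 b2.
  - by move: Wb1 Wb2 => /= /eqP E1 /eqP E2; rewrite E1 E2.
  - move: (Wb2) => /= /andP [/eqP Tf2 _]; rewrite Tf2 in Xf2.
    by have := T21 _ Xf2; rewrite /= -Tf2 mem_head => /(_ isT).
  - move: (Wb1) => /= /andP [/eqP Tf1 _]; rewrite Tf1 in Xf1.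
    by have := T12 _ Xf1; rewrite /= -Tf1 mem_head => /(_ isT).
  - move: (Wb1) (Wb2) => /= /andP [/eqP Tf1 _] /andP [/eqP Tf2 _].
    rewrite Tf1 in Xf1; rewrite Tf2 in Xf2.
    have h1 : w1 \in map ntail (f2 :: b2') by apply: T12; rewrite // -Tf1 mem_head.
    have h2 : w2 \in map ntail (f1 :: b1') by apply: T21; rewrite // -Tf2 mem_head.
    have [g1 [_ [_ G1 _]]] := walk_split Wb1 h2.
    have [g2 [_ [_ G2 _]]] := walk_split Wb2 h1.
    have := acyc _ _ (walk_catP G1 G2).
    by case: g1 G1 => [/= /eqP|//].
rewrite -Ew in Wb2.
have HXb : forall x, x \in X -> (x \in map ntail b1) = (x \in map ntail b2).
  move=> x Hx; apply/idP/idP; [exact: T12|exact: T21].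
have Hs' : size b1 + size b2 <= n.
  move: Hs; rewrite /= !size_cat; lia.
have [p'' [Wp Pp]] := IH w1 b1 b2 (c (+) (u \in X)) Hs' Wb1 Wb2 HXb.
rewrite /= T1 T2 addNb.
move: Pp; case: (c (+) (u \in X)) => Pp /=.
  exists (e1 :: a1 ++ p''); split; first exact: walk_catP Wea1 Wp.
  rewrite !sel_noX //= -catA perm_cons perm_cat2l; exact: Pp.
exists (e2 :: a2 ++ p''); split; first by rewrite Ew in Wp; exact: walk_catP Wea2 Wp.
rewrite !sel_noX //= perm_sym -cat_cons perm_catCA perm_sym.
by rewrite -cat_cons perm_cat2l.
Qed.

Lemma sel_count (V : finType) (Z : nbp V) (X : {set nvert Z}) (a : pred (nedge Z)) c p :
  count a (sel X c p) + count a (sel X (~~ c) p) = count a p.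
Proof.
elim: p c => [|e p IH] c //=.
rewrite addNb; case: (c (+) (ntail e \in X)) => /=.
  by rewrite -addnA IH.
by rewrite addnCA IH.
Qed.

Lemma sel_sub (V : finType) (Z : nbp V) (X : {set nvert Z}) c p :
  {subset sel X c p <= p}.
Proof.
elim: p c => [|e p IH] c //= x.
case: (c (+) (ntail e \in X)); rewrite ?in_cons.
  by case/orP => [->//|/IH ->]; rewrite orbT.
by move/IH ->; rewrite orbT.
Qed.

Lemma sel_nth (V : finType) (Z : nbp V) (X : {set nvert Z}) c p e :
  e \in sel X c p -> exists k, onth p k = Some e /\
     c (+) odd (count (fun e => ntail e \in X) (take k.+1 p)).
Proof.
elim: p c => [|f p IH] c //=.
case Hc: (c (+) (ntail f \in X)).
  rewrite in_cons => /orP [/eqP ->|].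
    by exists 0; split => //=; rewrite take0 addn0 oddb Hc.
  move/IH => [k [Hk Ho]]; exists k.+1; split; first by [].
  by rewrite /= oddD oddb addbA Hc.
move/IH => [k [Hk Ho]]; exists k.+1; split; first by [].
by rewrite /= oddD oddb addbA Hc.
Qed.

Definition Good (V : finType) (Z : nbp V) (X : {set nvert Z}) (Y1 Y2 : {set V}) c p :=
  (forall e x, e \in sel X c p -> labvar e = Some x -> x \notin Y2) /\
  (forall e x, e \in sel X (~~ c) p -> labvar e = Some x -> x \notin Y1).

Lemma oep_good (V : finType) (Z : nbp V) (X : {set nvert Z}) (Y1 Y2 : {set V}) p :
  (odd_even_parts X p Y1 Y2 -> Good X Y1 Y2 true p) /\
  (odd_even_parts X p Y2 Y1 -> Good X Y1 Y2 false p).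
Proof.
split=> H; split=> e x /sel_nth [k [Hk Ho]] Hl; have [h1 h2] := H k e x Hk Hl;
  rewrite /part_index /= ?negbK in h1 h2; move: Ho => /= Ho; apply/negP.
- by move/h2; move: Ho; rewrite ?addTb => /negbTE ->.
- by move/h1; move: Ho; rewrite ?addFb => ->.
- by move/h1; move: Ho; rewrite ?addFb => ->.
- by move/h2; move: Ho; rewrite ?addTb => /negbTE ->.
Qed.

Lemma heads_tails (V : finType) (Z : nbp V) (u v x : nvert Z) p :
  walk u v p -> x \in map nhead p -> x != v -> x \in map ntail p.
Proof.
elim: p u => [|e p IH] u //= /andP [_ Wp].
rewrite in_cons => /orP [/eqP ->|Hx] Hv.
  case: p {IH} Wp Hv => [/= /eqP -> /eqP //|f p /= /andP [/eqP -> _] _].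
  by rewrite in_cons mem_head orbT.
by rewrite in_cons (IH _ Wp Hx Hv) orbT.
Qed.

Lemma X_tails (V : finType) (Z : nbp V) (X : {set nvert Z}) p :
  nsrc Z \notin X -> nsnk Z \notin X -> ss_path p -> {subset X <= path_verts p} ->
  forall x, x \in X -> x \in map ntail p.
Proof.
move=> Hs Ht Wp HX x Hx; have := HX x Hx; rewrite /path_verts in_cons.
case/orP => [/eqP Ex|Hh]; first by rewrite -Ex Hx in Hs.
apply: heads_tails Wp Hh _; apply/eqP => Ex; by rewrite -Ex Hx in Ht.
Qed.

Lemma good_transfer (V : finType) (Z : nbp V) (X : {set nvert Z}) (Y1 Y2 : {set V}) d c P Q :
  (forall (x : nvert Z) (p : seq (nedge Z)), walk x x p -> p = [::]) ->
  uniform_read Z d -> ss_path P -> ss_path Q ->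
  (forall x, x \in X -> x \in map ntail P) ->
  (forall x, x \in X -> x \in map ntail Q) ->
  Good X Y1 Y2 c P -> Good X Y1 Y2 c Q.
Proof.
move=> acyc U WP WQ XP XQ [G1 G2].
have HXPQ : forall x, x \in X -> (x \in map ntail P) = (x \in map ntail Q).
  by move=> x Hx; rewrite XP ?XQ.
have HXQP : forall x, x \in X -> (x \in map ntail Q) = (x \in map ntail P).
  by move=> x Hx; rewrite XP ?XQ.
split=> e x He Hl; apply/negP => Hx.
- have [R [WR PR]] := @splice V Z X acyc _ _ Q P c (leqnn _) WQ WP HXQP.
  pose a := fun e : nedge Z => labvar e == Some x.
  have cR := U _ WR x; have cP := U _ WP x.
  have := (permP PR) a; rewrite count_cat.
  have c0 : count a (sel X c P) = 0.
    apply/eqP; rewrite -leqn0 leqNgt -has_count; apply/hasPn => f Hf.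
    by apply/negP => /eqP Hf'; have := G1 _ _ Hf Hf'; rewrite Hx.
  have := sel_count X a c P; rewrite c0.
  have : 0 < count a (sel X c Q) by rewrite -has_count; apply/hasP; exists e => //; rewrite /a Hl.
  rewrite /a in c0 *; move=> Hpos; rewrite add0n cP => HB; rewrite cR HB => /eqP.
  by rewrite -{1}(add0n d) eqn_add2r => /eqP H0; rewrite -H0 in Hpos.
- have [R [WR PR]] := @splice V Z X acyc _ _ P Q c (leqnn _) WP WQ HXPQ.
  pose a := fun e : nedge Z => labvar e == Some x.
  have cR := U _ WR x; have cP := U _ WP x.
  have := (permP PR) a; rewrite count_cat.
  have c0 : count a (sel X (~~ c) P) = 0.
    apply/eqP; rewrite -leqn0 leqNgt -has_count; apply/hasPn => f Hf.
    by apply/negP => /eqP Hf'; have := G2 _ _ Hf Hf'; rewrite Hx.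
  have := sel_count X a c P; rewrite c0.
  have : 0 < count a (sel X (~~ c) Q) by rewrite -has_count; apply/hasP; exists e => //; rewrite /a Hl.
  rewrite /a in c0 *; move=> Hpos; rewrite addn0 cP => HB; rewrite cR HB => /eqP.
  by rewrite -{1}(addn0 d) eqn_add2l => /eqP H0; rewrite -H0 in Hpos.
Qed.

Lemma conn_in (V : finType) (H : btbg V) (i : 'I_(ntrees H)) (l u : V) :
  (forall v, v \in tverts i -> v != troot i -> tpar i v \in tverts i) ->
  l \in tverts i -> connect (pstep i) l u -> u \in tverts i.
Proof.
move=> Hp Hl /connectP [s Hs ->] {u}.
elim: s l Hl Hs => [|a s IH] l Hl //= /andP [Hst Hs].
apply: IH Hs; move: Hst => /and3P [_ Hn /eqP ->]; exact: Hp.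
Qed.

Lemma conn_leaf (V : finType) (H : btbg V) (i : 'I_(ntrees H)) (l u : V) :
  connect (pstep i) l u -> leaf i u -> u = l.
Proof.
move=> /connectP [s Hs Hu]; case/lastP: s Hs Hu => [//|s a].
rewrite rcons_path last_rcons => /andP [_ /and3P [Hin Hnr /eqP Ha]] -> {u}.
case/andP => _ /eqP Hch.
have : last l s \in children i a by rewrite inE in_setD1 Hnr Hin -Ha eqxx.
by rewrite Hch inE.
Qed.

Lemma halfpath_root (V : finType) (H : btbg V) (i j k : 'I_(ntrees H)) (u : V) :
  is_btbg H -> i != j -> u \in halfpath j i -> u = troot k -> k != j ->
  u \in halfpath i j.
Proof.
case=> Htree _ _ Hcard Hshare Hij.
rewrite inE => /existsP [l /and3P [Hlj Hli Hc]] Hu Hkj.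
have [[Hrj Hpj Hcj] _] := Htree j.
have [[Hrk _ _] _] := Htree k.
have [[Hri _ Hci] _] := Htree i.
have Huj : u \in tverts j := conn_in Hpj (proj1 (andP Hlj)) Hc.
have Huk : u \in tverts k by rewrite Hu.
have [Hluk Hluj _] := Hshare k j u Hkj Huk Huj.
have Eul := conn_leaf Hc Hluj; subst l.
have Hki : k = i.
  apply/eqP; apply/negPn/negP => Hki.
  have := Hcard _ _ Hli.
  have Hsub : k |: [set i; j] \subset [set m | leaf m u].
    by apply/subsetP => m; rewrite !inE -?orbA => /or3P [] /eqP ->.
  have := subset_leq_card Hsub.
  rewrite cardsU1 cards2 !inE negb_or Hij Hki Hkj /= => ? ?; lia.
subst k; rewrite inE; apply/existsP; exists u.
by rewrite Hli Hluj connect0.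
Qed.

Lemma key (V : finType) (H : btbg V) (Z : nbp V) (d : nat)
    (X : {set nvert Z}) (Y1 Y2 : {set V})
    (M : {set 'I_(ntrees H) * 'I_(ntrees H)}) (S : {set V * bool}) e p1 p2 :
  is_btbg H -> is_nbp Z -> uniform_read Z d -> computes Z (phiH H) ->
  Y1 \subset Roots H -> Y2 \subset Roots H ->
  separates X Y1 Y2 ->
  pseudomatching_between M Y1 Y2 ->
  assignment_on S (~: bigcupM M) -> e \in M ->
  ss_path p1 -> computational p1 -> {subset X <= path_verts p1} -> S \subset lits p1 ->
  ss_path p2 -> computational p2 -> {subset X <= path_verts p2} -> S \subset lits p2 ->
  (forall u, u \in halfpath e.1 e.2 -> (u, true) \notin lits p1) ->
  (forall u, u \in halfpath e.2 e.1 -> (u, true) \notin lits p2) -> False.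
Proof.
move=> HB [acyc _ _] U Hcomp HY1 HY2 [Hdisj Hsrc Hsnk [P [WP _ HPX Hoe]]] [HM _] [_ HS] He
  W1 C1 X1 S1 W2 C2 X2 S2 F1 F2.
have XT := X_tails Hsrc Hsnk.
have [c Gc] : exists c, Good X Y1 Y2 c P.
  have [o1 o2] := oep_good X Y1 Y2 P.
  by case: Hoe => [/o1|/o2] G; eexists; exact: G.
have G1 := good_transfer acyc U WP W1 (XT _ WP HPX) (XT _ W1 X1) Gc.
have G2 := good_transfer acyc U WP W2 (XT _ WP HPX) (XT _ W2 X2) Gc.
have HX12 : forall x, x \in X -> (x \in map ntail p1) = (x \in map ntail p2).
  by move=> x Hx; rewrite (XT _ W1 X1 x Hx) (XT _ W2 X2 x Hx).
have [R [WR PR]] := @splice V Z X acyc _ _ p1 p2 c (leqnn _) W1 W2 HX12.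
have /and3P [Hadj Hi1 Hj2] := HM e He.
have Hij : e.1 != e.2 by case/andP: Hadj.
have Orig : forall l, l \in lits R ->
    (l \in lits p1 /\ l.1 \notin Y2) \/ (l \in lits p2 /\ l.1 \notin Y1).
  move=> [x b]; rewrite inE => /hasP [r Hr /eqP Hlab].
  have Hlv : labvar r = Some x by rewrite /labvar Hlab.
  move: Hr; rewrite (perm_mem PR) mem_cat => /orP [Hr|Hr].
    left; split; last exact: (proj1 G1) _ _ Hr Hlv.
    by rewrite inE; apply/hasP; exists r; [exact: sel_sub Hr|rewrite Hlab].
  right; split; last exact: (proj2 G2) _ _ Hr Hlv.
  by rewrite inE; apply/hasP; exists r; [exact: sel_sub Hr|rewrite Hlab].
have Sfix : forall x, x \notin Y1 -> x \notin Y2 -> ((x, true) \in S) || ((x, false) \in S).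
  move=> x n1 n2.
  have Hx : x \in ~: bigcupM M.
    rewrite inE; apply/negP; rewrite inE => /orP [] /imsetP [f Hf Ex].
      by have /and3P [_ h _] := HM f Hf; rewrite -Ex in h; rewrite h in n1.
    by have /and3P [_ _ h] := HM f Hf; rewrite -Ex in h; rewrite h in n2.
  by move: (HS x Hx); case: ((x, true) \in S); case: ((x, false) \in S).
have notboth : forall (p : seq (nedge Z)) (x : V), computational p -> (x, true) \in lits p -> (x, false) \in lits p -> False.
  by move=> p x Hc Ht Hf; move/forallP: Hc => /(_ x); rewrite Ht Hf.
have CR : computational R.
  apply/forallP => x; apply/negP => /andP [Ht Hf].
  case: (Orig _ Ht) => [[Ht1 n2]|[Ht2 n1]]; case: (Orig _ Hf) => [[Hf1 n2']|[Hf2 n1']].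
  - exact: notboth C1 Ht1 Hf1.
  - case/orP: (Sfix x n1' n2) => Hs.
      by apply: (notboth _ _ C2 _ Hf2); apply: (subsetP S2).
    by apply: (notboth _ _ C1 Ht1); apply: (subsetP S1).
  - case/orP: (Sfix x n1 n2') => Hs.
      by apply: (notboth _ _ C1 _ Hf1); apply: (subsetP S1).
    by apply: (notboth _ _ C2 Ht2); apply: (subsetP S2).
  - exact: notboth C2 Ht2 Hf2.
pose sigma := fun x => (x, true) \in lits R.
have Hsat : satisfies [set (x, sigma x) | x : V] (phiH H).
  apply/(Hcomp sigma); exists R; split => //.
  apply/subsetP => -[x b] Hl; apply/imsetP; exists x => //.
  case: b Hl => Hl; first by rewrite /sigma Hl.
  rewrite /sigma; case Ht: ((x, true) \in lits R) => //.
  by exfalso; apply: (notboth _ _ CR Ht Hl).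
have HP : Ppath e.1 e.2 \in phiH H by apply/imsetP; exists e.
have [u Hu /imsetP [x _ [Exu Hsx]]] := Hsat _ HP.
subst x.
have HuR : (u, true) \in lits R by rewrite /sigma in Hsx; exact: (esym Hsx).
move: Hu; rewrite /Ppath inE.
case: (Orig _ HuR) => [[Hu1 n2]|[Hu2 n1]] /= => /orP [Hh|Hh].
- by move: (F1 _ Hh); rewrite Hu1.
- case Hy1: (u \in Y1).
    have /imsetP [k _ Ek] := subsetP HY1 _ Hy1.
    have Hkj : k != e.2.
      apply/negP => /eqP Ekj; subst k.
      by move: (disjointFr Hdisj Hy1); rewrite Ek Hj2.
    by move: (F1 _ (halfpath_root HB Hij Hh Ek Hkj)); rewrite Hu1.
  case/orP: (Sfix u (negbT Hy1) n2) => Hs.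
    by move: (F2 _ Hh); rewrite (subsetP S2 _ Hs).
  by apply: (notboth _ _ C1 Hu1); apply: (subsetP S1).
- case Hy2: (u \in Y2).
    have /imsetP [k _ Ek] := subsetP HY2 _ Hy2.
    have Hki : k != e.1.
      apply/negP => /eqP Eki; subst k.
      by move: (disjointFr Hdisj Hi1); rewrite -Ek Hy2.
    have Hji : e.2 != e.1 by rewrite eq_sym.
    by move: (F2 _ (halfpath_root HB Hji Hh Ek Hki)); rewrite Hu2.
  case/orP: (Sfix u n1 (negbT Hy2)) => Hs.
    by move: (F1 _ Hh); rewrite (subsetP S1 _ Hs).
  by apply: (notboth _ _ C2 Hu2); apply: (subsetP S2).
- by move: (F2 _ Hh); rewrite Hu2.
Qed.

Theorem lemma7 (V : finType) (H : btbg V) (Z : nbp V) (d : nat)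
    (X : {set nvert Z}) (Y1 Y2 : {set V})
    (M : {set 'I_(ntrees H) * 'I_(ntrees H)}) (S : {set V * bool}) :
  is_btbg H -> is_nbp Z -> uniform_read Z d -> computes Z (phiH H) ->
  Y1 \subset Roots H -> Y2 \subset Roots H ->
  separates X Y1 Y2 ->
  pseudomatching_between M Y1 Y2 ->
  assignment_on S (~: bigcupM M) ->
  exists2 phi, phi \in CNFM M &
    forall p, ss_path p -> computational p -> {subset X <= path_verts p} ->
      S \subset lits p -> satisfies (lits p) phi.
Proof.
move=> HB HZ U Hcomp HY1 HY2 Hsep HMpm HS.
pose Q (e : 'I_(ntrees H) * 'I_(ntrees H)) (b : bool) :=
  forall p : seq (nedge Z), ss_path p -> computational p -> {subset X <= path_verts p} ->
    S \subset lits p ->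
    exists2 u, u \in (if b then halfpath e.1 e.2 else halfpath e.2 e.1) & (u, true) \in lits p.
pose f := [ffun e => if excluded_middle_informative (Q e true) then true else false].
have Qf : forall e, e \in M -> Q e (f e).
  move=> e He; rewrite ffunE; case: excluded_middle_informative => // nQ.
  move=> p2 W2 C2 X2 S2; apply: NNPP => nex2.
  apply nQ; move=> p1 W1 C1 X1 S1; apply: NNPP => nex1.
  apply: (key HB HZ U Hcomp HY1 HY2 Hsep HMpm HS He W1 C1 X1 S1 W2 C2 X2 S2).
    by move=> u Hu; apply/negP => Hl; apply: nex1; exists u.
  by move=> u Hu; apply/negP => Hl; apply: nex2; exists u.
exists [set (if f e then halfpath e.1 e.2 else halfpath e.2 e.1) | e in M].
  by rewrite inE; apply/existsP; exists f.
move=> p W C Xp Sp Cl /imsetP [e He ->].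
exact: (Qf e He p W C Xp Sp).
Qed.
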